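(* Let $\beta=(\beta_1,\dots,\beta_k)$ be a weak composition. Let $n_1<n_2<\dots<n_k$ be positive integers, and set $n_0=0$. Then $$n_1^{\beta_1}n_2^{\beta_2}\cdots n_k^{\beta_k}=\sum_{I=(i_1,\dots,i_k)}c_{\beta,I}\binom{n_1-1}{i_1}\binom{n_2-n_1-1}{i_2}\cdots\binom{n_k-n_{k-1}-1}{i_k}.$$ The sum runs over all $I\in\mathbb N^k$ with $\sum_{t=j}^k i_t\le\sum_{t=j}^k\beta_t$ for $j=1,\dots,k$, and $\binom{m}{n}=0$ if $m<n$.
   Context: $\mathbb N$ denotes the nonnegative integers, and $[n]=\{1,\dots,n\}$ (empty if $n=0$). Filtered pointed Stirling numbers. For $\beta\in\mathbb N^k$ put $b_j=\beta_1+\dots+\beta_j$, $b_0=0$. For $I=(i_1,\dots,i_k)\in\mathbb N^k$ put $N_j=(i_1+1)+\dots+(i_j+1)$, $N_0=0$. Then $c_{\beta,I}$ is the number of maps $f:[b_k]\to[N_k]$ such that: - $f([b_j])\subseteq[N_j]$ for all $j=1,\dots,k$, and - $f([b_k])\cup\{N_1,\dots,N_k\}=[N_k]$. When $\beta=0^k$, only the empty map exists, so $c_{0^k,0^k}=1$. Equivalently, for any $n_1<\dots<n_k$ and subsets $Y_j\subseteq[n_{j-1}+1,n_j-1]$ with $|Y_j|=i_j$, $c_{\beta,I}$ is the number of maps $f:[b_k]\to[n_k]$ with $f([b_j])\subseteq[n_j]$ for all $j$ and $f([b_k])\cap[n_{j-1}+1,n_j-1]=Y_j$ for all $j$. For $k=1$,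 $c_{(m),(i)}=i!\,S(m+1,i+1)$ with $S$ the Stirling numbers of the second kind. *)

(* Defs.v *)
From mathcomp Require Import all_boot.
Set Implicit Arguments. Unset Strict Implicit. Unset Printing Implicit Defensive.

(* Indices are 0-based: position t : 'I_k stands for index t+1 of the paper. *)

Definition psum (k : nat) (f : 'I_k -> nat) (j : nat) : nat :=
  \sum_(t < k | t < j) f t.

Definition ssum (k : nat) (f : 'I_k -> nat) (j : nat) : nat :=
  \sum_(t < k | j <= t) f t.

Definition Nsum (k : nat) (I : 'I_k -> nat) (j : nat) : nat :=
  \sum_(t < k | t < j) (I t).+1.

(* Filtered pointed Stirling number c_{beta,I}: number of maps
   f : [b_k] -> [N_k] (here 0-based: 'I_(b_k) -> 'I_(N_k), element x <-> x+1)
   with f([b_j]) subset [N_j] for all j = 1..k and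
   f([b_k]) ∪ {N_1,...,N_k} = [N_k]. *)
Definition cStir (k : nat) (beta I : 'I_k -> nat) : nat :=
  #|[set f : {ffun 'I_(psum beta k) -> 'I_(Nsum I k)} |
     [forall j : 'I_k, forall x : 'I_(psum beta k),
        (x < psum beta j.+1) ==> (f x < Nsum I j.+1)]
     && [forall y : 'I_(Nsum I k),
        [exists x, f x == y] || [exists j : 'I_k, y.+1 == Nsum I j.+1]]]|.

(* nprev n t = n_{t} in the paper's 1-based numbering for 0-based position t,
   i.e. the value preceding position t; equals n_0 = 0 when t = 0. *)
Definition nprev (k : nat) (n : 'I_k -> nat) (t : nat) : nat :=
  if t is u.+1 then (if insub u is Some u' then n u' else 0) else 0.

(* Main.v *)
Require Import Defs.
From mathcomp Require Import all_boot zify.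
Set Implicit Arguments. Unset Strict Implicit. Unset Printing Implicit Defensive.

Section PS.
Variables (k : nat) (a : 'I_k -> nat).

Lemma psum_mono i j : i <= j -> psum a i <= psum a j.
Proof.
move=> hij; rewrite /psum !(big_mkcond (fun t : 'I_k => t < _)) /=.
apply: leq_sum => t _; case: ifP => h; last by [].
by rewrite (leq_trans h hij).
Qed.

Lemma psumS (t : 'I_k) : psum a t.+1 = psum a t + a t.
Proof.
rewrite /psum (bigD1 t) //= addnC; congr (_ + _).
apply: eq_bigl => s; by rewrite ltnS ltn_neqAle andbC.
Qed.

Lemma psum_ge j : k <= j -> psum a j = psum a k.
Proof.
move=> h; apply: eq_bigl => t; by rewrite (leq_trans (ltn_ord t) h) ltn_ord.
Qed.

Lemma psum0 : psum a 0 = 0.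
Proof. by rewrite /psum big_pred0. Qed.

Lemma psum_block y : y < psum a k ->
  exists t : 'I_k, psum a t <= y < psum a t.+1.
Proof.
move=> hy.
suff: forall j, j <= k -> y < psum a j -> exists t : 'I_k, psum a t <= y < psum a t.+1.
  by move/(_ k (leqnn k) hy).
elim=> [|j IH] hj; first by rewrite psum0.
have hjk : j < k by [].
case: (ltnP y (psum a j)) => h1 h2.
  exact: IH (ltnW hjk) h1.
exists (Ordinal hjk); by rewrite h1 h2.
Qed.

Lemma psum_block_uniq y (s t : 'I_k) : psum a s <= y < psum a s.+1 ->
  psum a t <= y < psum a t.+1 -> s = t.
Proof.
move=> /andP[h1 h2] /andP[h3 h4]; apply: val_inj => /=.
case: (ltngtP s t) => // h.
  have := psum_mono h; lia.
have := psum_mono h; lia.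
Qed.

Lemma psum_split j : psum a k = psum a j + ssum a j.
Proof.
rewrite /psum /ssum (bigID (fun t : 'I_k => t < j)) /=; congr (_ + _).
  by apply: eq_bigl => t; rewrite ltn_ord.
by apply: eq_bigl => t; rewrite ltn_ord -leqNgt.
Qed.

End PS.

Lemma card_interval M lo hi : hi <= M ->
  #|[set y : 'I_M | lo <= y < hi]| = hi - lo.
Proof.
move=> hM; rewrite -sum1_card big_mkcond /=.
rewrite (eq_bigr (fun y : 'I_M => nat_of_bool (lo <= y < hi))); last first.
  by move=> y _; rewrite inE; case: (_ && _).
rewrite -(big_mkord xpredT (fun y => nat_of_bool (lo <= y < hi))).
suff: forall m, \sum_(0 <= y < m) (lo <= y < hi) = minn hi m - minn lo m.
  move=> ->; lia.
elim=> [|m IH]; first by rewrite big_geq.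
rewrite big_nat_recr //= IH; case: (boolP (lo <= m < hi)) => /= h; lia.
Qed.


Definition mark k (a : 'I_k -> nat) (y : nat) := [exists j : 'I_k, y.+1 == Nsum a j.+1].
Definition gap k (a : 'I_k -> nat) (y : nat) : nat :=
  if [pick t : 'I_k | Nsum a t <= y < Nsum a t.+1] is Some t then val t else 0.

Section Gap.
Variables (k : nat) (a : 'I_k -> nat).
Local Notation N := (Nsum a).

Lemma NsumS (t : 'I_k) : N t.+1 = N t + (a t).+1.
Proof. exact: (psumS (fun t => (a t).+1)). Qed.

Lemma Nsum_mono i j : i <= j -> N i <= N j.
Proof. exact: (psum_mono (fun t => (a t).+1)). Qed.

Lemma Nsum_ge j : k <= j -> N j = N k.
Proof. exact: (psum_ge (fun t => (a t).+1)). Qed.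

Lemma Nsum0 : N 0 = 0.
Proof. exact: (psum0 (fun t => (a t).+1)). Qed.

Lemma gap_eq (t : 'I_k) y : N t <= y < N t.+1 -> gap a y = t.
Proof.
move=> h; rewrite /gap; case: pickP => [s hs|/(_ t)]; last by rewrite h.
by rewrite (psum_block_uniq hs h).
Qed.

Lemma gap_spec y : y < N k -> gap a y < k /\ N (gap a y) <= y < N (gap a y).+1.
Proof.
move=> hy; have [t ht] := psum_block hy.
by rewrite (gap_eq ht) ltn_ord.
Qed.

Lemma le_gap y j : y < N k -> (N j <= y) = (j <= gap a y).
Proof.
move=> hy; have [hg /andP[h1 h2]] := gap_spec hy.
case: (leqP j (gap a y)) => h.
  by rewrite (leq_trans (Nsum_mono h) h1).
apply/negbTE; rewrite -ltnNge; exact: leq_trans h2 (Nsum_mono h).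
Qed.

Lemma lt_gap y j : y < N k -> (y < N j) = (gap a y < j).
Proof. by move=> hy; rewrite ltnNge le_gap // -ltnNge. Qed.

Lemma mark_gap y : y < N k -> mark a y = (y.+1 == N (gap a y).+1).
Proof.
move=> hy; have [hg /andP[h1 h2]] := gap_spec hy.
apply/existsP/idP => [[j /eqP hj]|/eqP h].
  have hj' : N j <= y < N j.+1 by rewrite NsumS in hj *; lia.
  by rewrite (gap_eq hj') hj.
by exists (Ordinal hg); rewrite h.
Qed.

Lemma nonmark_gap y (t : 'I_k) : y < N k ->
  (~~ mark a y && (gap a y == t)) = (N t <= y < N t + a t).
Proof.
move=> hy; rewrite mark_gap //; have [hg /andP[h1 h2]] := gap_spec hy.
apply/idP/idP => [/andP[h3 /eqP h4]|/andP[h3 h4]].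
  move: h1 h2 h3; rewrite h4 NsumS; lia.
have e : gap a y = t by apply: gap_eq; rewrite NsumS; lia.
by rewrite e eqxx andbT NsumS; lia.
Qed.

Lemma cardS_sum (T : finType) (P : pred T) : #|[set x | P x]| = \sum_x P x.
Proof.
rewrite -sum1_card big_mkcond /=; apply: eq_bigr => x _; rewrite inE.
by case: (P x).
Qed.

Lemma sum_gap M (hM : Nsum a k = M) (G : nat -> nat) :
  \sum_(y : 'I_M | ~~ mark a y) G (gap a y) = \sum_(t : 'I_k) a t * G t.
Proof.
transitivity (\sum_(y : 'I_M | ~~ mark a y) \sum_(t : 'I_k) (if gap a y == t then G t else 0)).
  apply: eq_bigr => y _.
  have hy : y < N k by rewrite hM.
  have [hg _] := gap_spec hy.
  rewrite (bigD1 (Ordinal hg)) //= eqxx big1 ?addn0 // => t ht.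
  case: eqP => // e; move: ht; suff -> : t = Ordinal hg by rewrite eqxx.
  by apply: val_inj.
rewrite exchange_big /=; apply: eq_bigr => t _.
rewrite -big_mkcondr /= sum_nat_const; congr (_ * _).
have hle : N t + a t <= M.
  rewrite -hM; apply: leq_trans (Nsum_mono (ltn_ord t)); rewrite NsumS; lia.
have := card_interval (N t) hle; rewrite addKn => <-.
rewrite cardS_sum -sum1_card big_mkcond; apply: eq_bigr => y _ /=; rewrite unfold_in -nonmark_gap; last by rewrite hM. by case: (_ && _).
Qed.

End Gap.


Definition valid k (a : 'I_k -> nat) B M (lv : nat -> 'I_k) (f : {ffun 'I_B -> 'I_M}) : bool :=
  [forall x, f x < Nsum a (lv x).+1] && [forall y : 'I_M, [exists x, f x == y] || mark a y].
Definition Cnt k (a : 'I_k -> nat) B M lv := #|[set f : {ffun 'I_B -> 'I_M} | valid a lv f]|.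

Definition ext B (T : finType) (f : {ffun 'I_B -> T}) (y : T) : {ffun 'I_B.+1 -> T} :=
  [ffun x => if unlift ord_max x is Some x' then f x' else y].

Lemma ext_lift B (T : finType) (f : {ffun 'I_B -> T}) y x : ext f y (lift ord_max x) = f x.
Proof. by rewrite ffunE liftK. Qed.

Lemma ext_max B (T : finType) (f : {ffun 'I_B -> T}) y : ext f y ord_max = y.
Proof. by rewrite ffunE unlift_none. Qed.

Lemma split_ffun B (T : finType) (F : {ffun 'I_B.+1 -> T} -> nat) :
  \sum_f F f = \sum_(f : {ffun 'I_B -> T}) \sum_(y : T) F (ext f y).
Proof.
rewrite pair_big /=.
pose g (f : {ffun 'I_B.+1 -> T}) := ([ffun x => f (lift ord_max x)], f ord_max).
rewrite (reindex (fun p : {ffun 'I_B -> T} * T => ext p.1 p.2)) //.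
exists g => [[f y]|f] _ /=.
  rewrite /g ext_max; congr (_, _); apply/ffunP => x; by rewrite ffunE ext_lift.
apply/ffunP => x; rewrite ffunE; case: unliftP => [x' ->|->] /=.
  by rewrite ffunE.
by [].
Qed.

Lemma forall_last B (P : 'I_B.+1 -> bool) :
  [forall x, P x] = [forall x : 'I_B, P (lift ord_max x)] && P ord_max.
Proof.
apply/forallP/andP => [h|[/forallP h1 h2] x]; first by split => //; apply/forallP.
by case: (unliftP ord_max x) => [x' ->|->].
Qed.

Lemma exists_last B (P : 'I_B.+1 -> bool) :
  [exists x, P x] = [exists x : 'I_B, P (lift ord_max x)] || P ord_max.
Proof.
apply/existsP/orP => [[x]|[/existsP [x h]|h]].
- by case: (unliftP ord_max x) => [x' ->|->] h; [left; apply/existsP; exists x'|right].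
- by exists (lift ord_max x).
- by exists ord_max.
Qed.

Section Rec.
Variables (k : nat) (a : 'I_k -> nat) (lv : nat -> 'I_k).
Local Notation N := (Nsum a).

Lemma valid_ext B M (f : {ffun 'I_B -> 'I_M}) y :
  valid a lv (ext f y) = [forall x, f x < N (lv x).+1] && (y < N (lv B).+1) &&
     [forall z : 'I_M, [exists x, f x == z] || (y == z) || mark a z].
Proof.
rewrite /valid forall_last ext_max; congr ((_ && _) && _).
  apply: eq_forallb => x; by rewrite ext_lift lift_max.
apply: eq_forallb => z; rewrite exists_last ext_max.
have -> : [exists x, ext f y (lift ord_max x) == z] = [exists x, f x == z] by apply: eq_existsb => x; rewrite ext_lift.
by [].
Qed.

Lemma bool_split B M (f : {ffun 'I_B -> 'I_M}) (y : 'I_M) :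
  [forall z : 'I_M, [exists x, f x == z] || (y == z) || mark a z] =
  [forall z : 'I_M, [exists x, f x == z] || mark a z] ||
  (~~ mark a y && ~~ [exists x, f x == y] &&
     [forall z : 'I_M, (z == y) || [exists x, f x == z] || mark a z]).
Proof.
apply/idP/idP => [/forallP h|].
- case: (boolP [forall z : 'I_M, [exists x, f x == z] || mark a z]) => //=.
  rewrite negb_forall => /existsP [z0]; rewrite negb_or => /andP[n1 n2].
  have := h z0; rewrite (negbTE n1) (negbTE n2) /= orbF => /eqP e; subst z0.
  rewrite n1 n2 /=; apply/forallP => z; have := h z.
  rewrite [y == z]eq_sym; by case: (z == y); case: [exists x, f x == z]; case: (mark a z).
case/orP => H; apply/forallP => z.
- move/forallP: H => /(_ z).
  by case: (y == z); case: [exists x, f x == z]; case: (mark a z).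
- move: H => /andP[/andP[h1 h2] /forallP /(_ z)].
  rewrite [y == z]eq_sym; by case: (z == y); case: [exists x, f x == z]; case: (mark a z).
Qed.

Lemma rec B M (hM : N (lv B).+1 <= M) :
  Cnt a B.+1 M lv = N (lv B).+1 * Cnt a B M lv +
  \sum_(y : 'I_M | (y < N (lv B).+1) && ~~ mark a y)
    #|[set f : {ffun 'I_B -> 'I_M} | [forall x, f x < N (lv x).+1] &&
        ~~ [exists x, f x == y] &&
        [forall z : 'I_M, (z == y) || [exists x, f x == z] || mark a z]]|.
Proof.
rewrite /Cnt cardS_sum split_ffun.
transitivity (\sum_(f : {ffun 'I_B -> 'I_M}) \sum_(y : 'I_M)
   ((valid a lv f) * (y < N (lv B).+1) + ((y < N (lv B).+1) && ~~ mark a y) *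
     ([forall x, f x < N (lv x).+1] && ~~ [exists x, f x == y] &&
        [forall z : 'I_M, (z == y) || [exists x, f x == z] || mark a z]))).
  apply: eq_bigr => f _; apply: eq_bigr => y _.
  rewrite valid_ext bool_split /valid.
  set Q := [forall z : 'I_M, (z == y) || _ || _].
  have ex : [forall z : 'I_M, [exists x, f x == z] || mark a z] ->
            [exists x, f x == y] || mark a y by move/forallP; apply.
  move: ex.
  case: [forall x, f x < N (lv x).+1]; case: (y < N (lv B).+1);
  case: [forall z : 'I_M, [exists x, f x == z] || mark a z];
  case: (mark a y); case: [exists x, f x == y]; case: Q; move=> /= h //; by have := h isT.
under eq_bigr => f _ do rewrite big_split. rewrite big_split /=; congr (_ + _).
  rewrite mulnC cardS_sum big_distrl /=; apply: eq_bigr => f _.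
  rewrite -big_distrr /=; congr (_ * _).
  rewrite -cardS_sum (@card_interval M 0 _ hM) subn0 //.
rewrite exchange_big /= [RHS]big_mkcond /=; apply: eq_bigr => y _.
rewrite -big_distrr /= cardS_sum; by case: (_ && _); rewrite ?mul1n ?mul0n.
Qed.

End Rec.


Definition dec k (a : 'I_k -> nat) (t : nat) : 'I_k -> nat :=
  fun s => if val s == t then (a s).-1 else a s.

Section Comp.
Variables (k : nat) (a : 'I_k -> nat) (lv : nat -> 'I_k).
Local Notation N := (Nsum a).

Lemma Nsum_dec (t : 'I_k) j : 0 < a t -> Nsum (dec a t) j = N j - (t < j).
Proof.
move=> ha; rewrite /Nsum /psum; case: (ltnP t j) => h.
  rewrite (bigD1 t) //= [in RHS](bigD1 t) //= /dec eqxx.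
  rewrite (eq_bigr (fun s : 'I_k => (a s).+1)); first by lia.
  by move=> s /andP[_ /negbTE]; rewrite -val_eqE /= => ->.
rewrite subn0; apply: eq_bigr => s hs; rewrite /dec.
by case: (val s =P val t) => // e; move: hs; rewrite e ltnNge h.
Qed.

Variables (t : 'I_k) (y : nat).
Hypothesis (ha : 0 < a t) (hy : N t <= y < N t + a t).

Lemma bump_lt z j : (bump y z < N j) = (z < Nsum (dec a t) j).
Proof.
rewrite Nsum_dec // /bump; move: hy => /andP[h1 h2].
case: (ltnP t j) => h.
  have := Nsum_mono a h; rewrite NsumS /=; case: (leqP y z) => /= h3 h4; lia.
have := Nsum_mono a h; case: (leqP y z) => /= h3 h4; lia.
Qed.

Lemma bump_mark z : mark (dec a t) z = mark a (bump y z).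
Proof.
rewrite /mark; apply: eq_existsb => j; rewrite Nsum_dec // /bump.
move: hy => /andP[h1 h2].
case: (ltnP t j.+1) => h.
  have := Nsum_mono a h; rewrite NsumS /=; case: (leqP y z) => /= h3 h4;
  apply/eqP/eqP; lia.
have := Nsum_mono a h; case: (leqP y z) => /= h3 h4; apply/eqP/eqP; lia.
Qed.

End Comp.

Section Comp2.
Variables (k : nat) (a : 'I_k -> nat) (lv : nat -> 'I_k).
Local Notation N := (Nsum a).

Lemma compress B M (hM : N k = M) (y : 'I_M) (hy : ~~ mark a y) :
  #|[set f : {ffun 'I_B -> 'I_M} | [forall x, f x < N (lv x).+1] &&
      ~~ [exists x, f x == y] &&
      [forall z : 'I_M, (z == y) || [exists x, f x == z] || mark a z]]|
  = Cnt (dec a (gap a y)) B (Nsum (dec a (gap a y)) k) lv.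
Proof.
have hyM : y < N k by rewrite hM.
have [hg _] := gap_spec hyM.
pose t := Ordinal hg.
have hnm : N t <= y < N t + a t.
  by rewrite -nonmark_gap // hy /=.
have ha : 0 < a t by lia.
change (gap a y) with (val t).
rewrite Nsum_dec // ltn_ord subn1 hM.
have hM2 : 0 < M.-1.
  have := Nsum_mono a (ltn_ord t); rewrite NsumS hM; lia.
pose d : 'I_M.-1 := Ordinal hM2.
pose lf (g : {ffun 'I_B -> 'I_M.-1}) : {ffun 'I_B -> 'I_M} := [ffun x => lift y (g x)].
have lf_inj : injective lf.
  move=> g1 g2 e; apply/ffunP => x; apply: (@lift_inj _ y).
  by move/ffunP: e => /(_ x); rewrite !ffunE.
have key : forall g, [forall x, lf g x < N (lv x).+1] &&
      ~~ [exists x, lf g x == y] &&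
      [forall z : 'I_M, (z == y) || [exists x, lf g x == z] || mark a z]
      = valid (dec a t) lv g.
  move=> g; rewrite /valid.
  have -> : [exists x, lf g x == y] = false.
    apply/negbTE/existsP => -[x]; rewrite ffunE eq_sym; apply/negP; exact: neq_lift.
  rewrite andbT; congr (_ && _).
    apply: eq_forallb => x; rewrite ffunE /=; exact: (@bump_lt k a t y ha hnm (g x) (lv x).+1).
  apply/forallP/forallP => h z.
    have := h (lift y z); rewrite eq_sym (negbTE (neq_lift y z)) /=.
    rewrite (@bump_mark k a t y ha hnm).
    have -> : [exists x, lf g x == lift y z] = [exists x, g x == z].
      by apply: eq_existsb => x; rewrite ffunE (inj_eq (@lift_inj _ y)).
    by [].
  case: (eqVneq z y) => [->|nz] //=.
  have nz' : y != z by rewrite eq_sym.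
  have [z' ez _] := unlift_some nz'.
  have ev : bump y z' = z by rewrite ez.
  have := h z'; rewrite (@bump_mark k a t y ha hnm) ev.
  have -> : [exists x, lf g x == z] = [exists x, g x == z'].
    by apply: eq_existsb => x; rewrite ffunE ez (inj_eq (@lift_inj _ y)).
  by [].
rewrite /Cnt -(card_imset _ lf_inj); apply: eq_card => f.
rewrite inE; apply/idP/imsetP => [hf|[g hg' ->]]; last by rewrite key; move: hg'; rewrite inE.
have fne : forall x, y != f x.
  move=> x; apply/negP => /eqP e; move: hf => /andP[/andP[_ /existsP]] h _; apply: h.
  by exists x; rewrite e.
exists [ffun x => odflt d (unlift y (f x))].
  rewrite inE -key.
  have -> : lf [ffun x => odflt d (unlift y (f x))] = f.
    apply/ffunP => x; rewrite !ffunE.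
    by have [z' ez ->] := unlift_some (fne x).
  exact: hf.
apply/ffunP => x; rewrite !ffunE.
by have [z' ez ->] := unlift_some (fne x).
Qed.

End Comp2.


Definition CC k (a : 'I_k -> nat) B (lv : nat -> 'I_k) := Cnt a B (Nsum a k) lv.

Section CCs.
Variables (k : nat) (lv : nat -> 'I_k).

Lemma CC_ext (a a' : 'I_k -> nat) B : a =1 a' -> CC a B lv = CC a' B lv.
Proof.
move=> e.
have eN : forall j, Nsum a j = Nsum a' j.
  by move=> j; apply: eq_bigr => t _; rewrite e.
have em : forall y, mark a y = mark a' y.
  by move=> y; apply: eq_existsb => j; rewrite eN.
rewrite /CC eN /Cnt; apply: eq_card => f; rewrite !inE /valid.
by under eq_forallb => x do rewrite eN; under [X in _ && X]eq_forallb => y do rewrite em.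
Qed.

Lemma CC_rec (a : 'I_k -> nat) B : CC a B.+1 lv =
  Nsum a (lv B).+1 * CC a B lv + \sum_(t : 'I_k | t <= lv B) a t * CC (dec a t) B lv.
Proof.
rewrite /CC rec; last exact: Nsum_mono.
congr (_ + _).
rewrite (eq_bigr (fun y : 'I_(Nsum a k) => CC (dec a (gap a y)) B lv)); last first.
  by move=> y /andP[_ hy]; rewrite compress.
rewrite big_mkcondl /=.
rewrite (eq_bigr (fun y : 'I_(Nsum a k) => (fun t => (t < (lv B).+1) * CC (dec a t) B lv) (gap a y))); last first.
  move=> y _ /=; rewrite lt_gap //; by case: (_ < _); rewrite ?mul1n ?mul0n.
rewrite (sum_gap (erefl _) (fun t => (t < (lv B).+1) * CC (dec a t) B lv)) [RHS]big_mkcond /=; apply: eq_bigr => t _.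
by rewrite ltnS; case: (_ <= _); rewrite ?mul1n ?muln0 ?muln1.
Qed.

Lemma CC_van (a : 'I_k -> nat) B j : 0 < CC a B lv ->
  ssum a j <= #|[set x : 'I_B | j <= lv x]|.
Proof.
rewrite /CC /Cnt => /card_gt0P [f]; rewrite inE => /andP[/forallP hb /forallP hc].
pose Y := [set y : 'I_(Nsum a k) | ~~ mark a y && (j <= gap a y)].
have eY : #|Y| = ssum a j.
  rewrite cardS_sum (eq_bigr (fun x : 'I_(Nsum a k) => if ~~ mark a x then nat_of_bool (j <= gap a x) else 0)); last by move=> x _; case: (~~ _).
  rewrite -big_mkcond /= (sum_gap (erefl _) (fun t => nat_of_bool (j <= t))).
  rewrite /ssum [RHS]big_mkcond /=; apply: eq_bigr => t _.
  by case: (_ <= _); rewrite ?muln1 ?muln0.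
rewrite -eY; apply: (leq_trans _ (leq_imset_card f _)); apply: subset_leq_card.
apply/subsetP => y; rewrite inE => /andP[hm hj].
have := hc y; rewrite (negbTE hm) orbF => /existsP [x /eqP hx].
apply/imsetP; exists x => //; rewrite inE.
have := hb x; rewrite hx; rewrite -le_gap in hj; last by [].
case: (leqP j (lv x)) => // h1 h2.
have := Nsum_mono a h1; lia.
Qed.

End CCs.


Lemma CC_small k (lv : nat -> 'I_k) (a : 'I_k -> nat) B t : 0 < CC a B lv -> a t <= B.
Proof.
move=> /(CC_van 0) h.
have h1 : a t <= ssum a 0.
  by rewrite /ssum (bigD1 t) //= leq_addr.
apply: leq_trans h1 (leq_trans h _).
by apply: leq_trans (max_card _) _; rewrite card_ord.
Qed.

Section Tele.
Variables (k : nat) (n : 'I_k -> nat).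
Hypothesis (hpos : forall t : 'I_k, 0 < n t)
  (hinc : forall s t : 'I_k, s < t -> n s < n t).

Lemma nprevS (u : nat) (hu : u < k) : nprev n u.+1 = n (Ordinal hu).
Proof. by rewrite /nprev insubT. Qed.

Lemma nprev_lt (t : 'I_k) : nprev n t < n t.
Proof.
case: t => [[|u] hu] /=; first exact: hpos.
have hu' : u < k by lia.
change (nprev n u.+1 < n (Ordinal hu)); by rewrite (nprevS hu'); apply: hinc => /=.
Qed.

Lemma tele m (hm : m < k) :
  \sum_(t : 'I_k | t <= m) (n t - nprev n t) = n (Ordinal hm).
Proof.
elim: m hm => [|m IH] hm.
  rewrite (bigD1 (Ordinal hm)) //= big1 ?addn0; first by rewrite /nprev subn0.
  move=> t /andP[h1 h2]; exfalso; move: h2; rewrite -val_eqE /=; lia.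
have hm' : m < k by lia.
rewrite (bigD1 (Ordinal hm)) //=.
rewrite (eq_bigl (fun t : 'I_k => t <= m)); last first.
  move=> t; rewrite -val_eqE /=; lia.
rewrite (IH hm'). change (n (Ordinal hm) - nprev n m.+1 + n (Ordinal hm') = n (Ordinal hm)). rewrite (nprevS hm').
have := hinc (s := Ordinal hm') (t := Ordinal hm); rewrite /= ltnSn => /(_ isT); lia.
Qed.

End Tele.


Section Main.
Variables (k : nat) (n : 'I_k -> nat).
Hypothesis (hpos : forall t : 'I_k, 0 < n t)
  (hinc : forall s t : 'I_k, s < t -> n s < n t).
Variable (lv : nat -> 'I_k).

Definition PP (a : 'I_k -> nat) := \prod_(t < k) 'C(n t - nprev n t - 1, a t).

Lemma bracket (a : 'I_k -> nat) (l : 'I_k) :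
  (forall t, a t <= n t - nprev n t - 1) ->
  Nsum a l.+1 + \sum_(t : 'I_k | t <= l) (n t - nprev n t - 1 - a t) = n l.
Proof.
move=> ha; rewrite /Nsum /psum (eq_bigl (fun t : 'I_k => t <= l)) // -big_split /=.
rewrite -[in RHS](_ : Ordinal (ltn_ord l) = l); last exact: val_inj.
rewrite -(tele hinc (ltn_ord l)).
apply: eq_bigr => t _; have := ha t; have := nprev_lt hpos hinc t; lia.
Qed.

Lemma inord_big R m : R < m -> inord m = ord0 :> 'I_R.+1.
Proof.
by move=> h; apply: val_inj; rewrite /= /inord /insubd insubF //; apply/negbTE; rewrite -leqNgt.
Qed.

Definition incr R (t : 'I_k) (J : {ffun 'I_k -> 'I_R.+1}) : {ffun 'I_k -> 'I_R.+1} :=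
  [ffun s => if s == t then inord (J s).+1 else J s].
Definition decr R (t : 'I_k) (J : {ffun 'I_k -> 'I_R.+1}) : {ffun 'I_k -> 'I_R.+1} :=
  [ffun s => if s == t then inord (J s).-1 else J s].

Lemma claim R B (hB : B < R) (t : 'I_k) :
  \sum_(I : {ffun 'I_k -> 'I_R.+1}) I t * CC (dec (fun s => nat_of_ord (I s)) t) B lv
       * PP (fun s => nat_of_ord (I s)) =
  \sum_(I : {ffun 'I_k -> 'I_R.+1}) CC (fun s => nat_of_ord (I s)) B lv
       * PP (fun s => nat_of_ord (I s)) * (n t - nprev n t - 1 - I t).
Proof.
rewrite (bigID (fun I : {ffun 'I_k -> 'I_R.+1} => 0 < I t)) /= [X in _ + X]big1 ?addn0;
  last by move=> I; rewrite lt0n negbK => /eqP ->.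
rewrite (reindex_onto (incr t) (decr t)) /=; last first.
  move=> I hI; apply/ffunP => s; rewrite !ffunE; case: eqP => [->|] //.
  apply: val_inj => /=; have h0 := ltn_ord (I t).
  have h1 : (I t).-1 < R.+1 by lia.
  rewrite inordK (inordK h1); lia.
rewrite [RHS](bigID (fun I : {ffun 'I_k -> 'I_R.+1} => I t < R)) /= [X in _ + X]big1 ?addn0;
  last first.
  move=> I; rewrite -leqNgt => hI.
  case: (posnP (CC (fun s => nat_of_ord (I s)) B lv)) => [->|h]; first by rewrite !mul0n.
  have := CC_small t h; lia.
apply: eq_big => [J|J hJ].
  rewrite ffunE eqxx; case: (ltnP (J t) R) => h.
    rewrite inordK ?ltnS // andTb; apply/eqP/ffunP => s; rewrite !ffunE.
    case: eqP => [->|] //; apply: val_inj => /=; rewrite inordK ?inordK //; lia.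
  by rewrite inord_big.
have hJR : J t < R.
  move: hJ => /andP[]; rewrite ffunE eqxx; case: (ltnP (J t) R) => // h.
  by rewrite inord_big.
rewrite ffunE eqxx inordK ?ltnS //.
rewrite (@CC_ext _ _ _ (fun s => nat_of_ord (J s))); last first.
  move=> s; rewrite /dec !ffunE; case: eqP => [e|/eqP ne].
    have -> : s = t by apply: val_inj.
    by rewrite eqxx /= inordK ?ltnS.
  by rewrite ifF //; apply/negbTE; rewrite -val_eqE.
rewrite /PP (bigD1 t) //= [in RHS](bigD1 t) //= ffunE eqxx inordK ?ltnS //.
rewrite (eq_bigr (fun s => 'C(n s - nprev n s - 1, J s))); last first.
  by move=> s /negbTE hs; rewrite ffunE hs.
set Q := (\prod_(i < k | i != t) _). set c := CC _ B lv.
have := mul_bin_left (n t - nprev n t - 1) (J t).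
set u := 'C(_, (J t).+1). set w := 'C(_, J t) => e.
rewrite mulnCA !mulnA [u * _]mulnC e.
by rewrite [RHS]mulnC !mulnA -(mulnA _ w c) (mulnC w c) mulnA.
Qed.

End Main.

Section Main2.
Variables (k : nat) (n : 'I_k -> nat).
Hypothesis (hpos : forall t : 'I_k, 0 < n t)
  (hinc : forall s t : 'I_k, s < t -> n s < n t).
Variable (lv : nat -> 'I_k).

Lemma CC0 : CC (fun _ : 'I_k => 0) 0 lv = 1.
Proof.
rewrite /CC /Cnt.
have -> : [set f : {ffun 'I_0 -> 'I_(Nsum (fun _ : 'I_k => 0) k)} | valid (fun _ => 0) lv f] = setT.
  apply/setP => f; rewrite !inE /valid; apply/andP; split; first by apply/forallP => -[].
  apply/forallP => y; apply/orP; right.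
  have hy : y < Nsum (fun _ : 'I_k => 0) k by [].
  rewrite mark_gap //; have [hg /andP[h1 h2]] := gap_spec hy.
  have := NsumS (fun _ : 'I_k => 0) (Ordinal hg); rewrite /= => e.
  apply/eqP; rewrite e; rewrite e in h2; lia.
by rewrite cardsT card_ffun !card_ord.
Qed.

Lemma PP_pos (a : 'I_k -> nat) : 0 < PP n a -> forall t, a t <= n t - nprev n t - 1.
Proof.
move=> h t; rewrite -bin_gt0; move: h; rewrite /PP (bigD1 t) //=.
by case: (posnP 'C(n t - nprev n t - 1, a t)) => [->|]; rewrite ?mul0n.
Qed.

Lemma gen R B : B <= R ->
  \sum_(I : {ffun 'I_k -> 'I_R.+1}) CC (fun s => nat_of_ord (I s)) B lv
       * PP n (fun s => nat_of_ord (I s)) = \prod_(x < B) n (lv x).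
Proof.
elim: B => [|B IH] hB.
  rewrite big_ord0 (bigD1 [ffun => ord0]) //= big1 ?addn0.
    rewrite (@CC_ext _ _ _ (fun _ => 0)); last by move=> s; rewrite ffunE.
    rewrite CC0 mul1n /PP big1 // => t _; by rewrite ffunE bin0.
  move=> I hI.
  case: (posnP (CC (fun s => nat_of_ord (I s)) 0 lv)) => [->//|h].
  exfalso; move/negP: hI; apply; apply/eqP/ffunP => t; rewrite ffunE.
  apply: val_inj => /=; have := CC_small t h; lia.
rewrite big_ord_recr /= -IH; last by lia.
rewrite big_distrl /=.
pose v (I : {ffun 'I_k -> 'I_R.+1}) := fun s => nat_of_ord (I s).
transitivity (\sum_(I : {ffun 'I_k -> 'I_R.+1}) (Nsum (v I) (lv B).+1 * CC (v I) B lv * PP n (v I)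
   + \sum_(t : 'I_k | t <= lv B) v I t * CC (dec (v I) t) B lv * PP n (v I))).
  apply: eq_bigr => I _; rewrite CC_rec mulnDl; congr (_ + _); by rewrite big_distrl.
rewrite big_split /= [X in _ + X]exchange_big /=.
rewrite (eq_bigr (fun t : 'I_k => \sum_(I : {ffun 'I_k -> 'I_R.+1})
   CC (v I) B lv * PP n (v I) * (n t - nprev n t - 1 - I t))); last first.
  by move=> t _; rewrite (claim _ _ hB t).
rewrite exchange_big /= -big_split /=; apply: eq_bigr => I _.
rewrite -big_distrr /=.
set c := CC _ B lv; set p := PP n _.
case: (posnP p) => [->|hp]; first by rewrite !muln0 !mul0n.
have := bracket hpos hinc (lv B) (PP_pos hp) => <-; rewrite mulnDr; congr (_ + _); by rewrite -mulnA mulnC.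
Qed.

End Main2.


Section Final.
Variables (k : nat) (beta : 'I_k.+1 -> nat).
Local Notation B := (psum beta k.+1).

Definition lvb (x : nat) : 'I_k.+1 :=
  odflt ord0 [pick t : 'I_k.+1 | psum beta t <= x < psum beta t.+1].

Lemma lvb_spec x : x < B -> psum beta (lvb x) <= x < psum beta (lvb x).+1.
Proof.
move=> hx; rewrite /lvb; case: pickP => [t ht //|h].
have [t ht] := psum_block hx; by move: (h t); rewrite ht.
Qed.

Lemma lvb_eq x (t : 'I_k.+1) : x < B -> (lvb x == t) = (psum beta t <= x < psum beta t.+1).
Proof.
move=> hx; have hs := lvb_spec hx.
apply/eqP/idP => [<-//|h]; exact: psum_block_uniq hs h.
Qed.

Lemma lvb_le x j : x < B -> (j <= lvb x) = (psum beta j <= x).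
Proof.
move=> hx; have /andP[h1 h2] := lvb_spec hx.
case: (leqP j (lvb x)) => h.
  by rewrite (leq_trans (psum_mono beta h) h1).
apply/esym/negbTE; rewrite -ltnNge; exact: leq_trans h2 (psum_mono beta h).
Qed.

Lemma prod_lvb (n : 'I_k.+1 -> nat) :
  \prod_(x < B) n (lvb x) = \prod_(t < k.+1) n t ^ beta t.
Proof.
rewrite (partition_big (fun x : 'I_B => lvb x) xpredT) //=.
apply: eq_bigr => t _.
rewrite (eq_bigr (fun _ => n t)); last by move=> x /eqP ->.
rewrite prod_nat_const; congr (_ ^ _).
have hle : psum beta t.+1 <= B by apply: psum_mono.
have := card_interval (psum beta t) hle; rewrite psumS addKn => <-.
apply: eq_card => x; rewrite !inE unfold_in /= -psumS.
have := lvb_eq t (ltn_ord x); by rewrite -val_eqE.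
Qed.

Lemma card_lvb j : #|[set x : 'I_B | j <= lvb x]| = ssum beta j.
Proof.
have h : B - psum beta j = ssum beta j by rewrite [in LHS](psum_split beta j) addKn.
rewrite -h -(card_interval (psum beta j) (leqnn B)).
apply: eq_card => x; rewrite !inE lvb_le ?ltn_ord //; by rewrite andbT.
Qed.

Lemma cStir_CC (a : 'I_k.+1 -> nat) : cStir beta a = CC a B lvb.
Proof.
rewrite /cStir /CC /Cnt; apply: eq_card => f; rewrite !inE /valid.
congr (_ && _).
apply/forallP/forallP => [h x|h j].
  have hx := ltn_ord x; have /andP[_ h2] := lvb_spec hx.
  by move/forallP: (h (lvb x)) => /(_ x); rewrite h2.
apply/forallP => x; apply/implyP => hx.
apply: leq_trans (h x) (Nsum_mono a _).
have /andP[h1 _] := lvb_spec (ltn_ord x).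
case: (leqP (lvb x) j) => // hj.
have := psum_mono beta hj; lia.
Qed.

End Final.


Theorem lemma5p3 (k : nat) (beta : 'I_k -> nat) (n : 'I_k -> nat)
  (hpos : forall t : 'I_k, 0 < n t)
  (hinc : forall s t : 'I_k, s < t -> n s < n t) :
  \prod_(t < k) n t ^ beta t =
  \sum_(I : {ffun 'I_k -> 'I_(psum beta k).+1} |
          [forall j : 'I_k, ssum (fun t => nat_of_ord (I t)) j <= ssum beta j])
     cStir beta (fun t => nat_of_ord (I t)) *
     \prod_(t < k) 'C(n t - nprev n t - 1, I t).
Proof.
case: k beta n hpos hinc => [|k] beta n hpos hinc.
  rewrite big_ord0 (bigD1 [ffun => ord0]) /=; last by apply/forallP => -[].
  rewrite [X in _ + X]big1 ?addn0; last first.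
    move=> J /andP[_ hI].
    by exfalso; move/negP: hI; apply; apply/eqP/ffunP => -[].
  rewrite big_ord0 muln1 /cStir.
  set S := [set f | _].
  have -> : S = setT.
    apply/setP => f; rewrite !inE; apply/andP; split; apply/forallP => -[] //.
    by move=> y hy; exfalso; move: (hy); rewrite /Nsum /psum big_ord0.
  by rewrite cardsT card_ffun !card_ord /psum big_ord0.
rewrite -(prod_lvb beta n) -(gen hpos hinc (lvb beta) (leqnn (psum beta k.+1))).
rewrite [RHS]big_mkcond /=; apply: eq_bigr => I _.
case: ifP => hf; first by rewrite cStir_CC.
case: (posnP (CC (fun s => nat_of_ord (I s)) (psum beta k.+1) (lvb beta))) => [->//|h].
exfalso; move/negbT: hf; rewrite negb_forall => /existsP [j]; rewrite -ltnNge.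
have := CC_van j h; rewrite card_lvb; lia.
Qed.
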